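(* Let $d\ge 5$, let $q_1,\ldots,q_d$ be nonzero real numbers with $|q_i|\ge e^e$, and let $P$ be the parameter defined below. Let $\psi$ be a smooth symmetric probability density on $\mathbb{R}$ supported in $[-1,1]$, and let $K = \widehat{\psi}$ be its (real-valued, symmetric) Fourier transform. Suppose that the inequality $|q_1 m_1^2 + \cdots + q_d m_d^2| < 1$ has no solution in integers $m_1,\ldots,m_d$, not all zero, satisfying $|q_1| m_1^2 + \cdots + |q_d| m_d^2 \le 4 d^3 P^2$. Then $$\operatorname{Re} \int_0^\infty S_1(\alpha)\cdots S_d(\alpha) K(\alpha)\, \mathrm{d}\alpha = 0.$$
   Context: Notation: $e(x) = \exp(2\pi i x)$; $\widehat{\psi}(\alpha) = \int_{\mathbb{R}} \psi(x) e(-\alpha x)\,\mathrm{d}x$. For $j=1,\ldots,d$, $S_j(\alpha) = \sum_{m \in \mathbb{Z},\ P < |q_j|^{1/2} m < 2dP} e(\alpha q_j m^2)$. The parameter $P$ is $P = \exp\{(1 + \tfrac{10 d^2}{\log\log H})\log H\}$ with $H = C_d\, q^{\frac12 + \beta}$, where $q = \max_j |q_j|$, $C_d \ge 1$ is a constant depending on $d$, and $\beta$ is the exponent attached to the signature $(r,s)$ of $(q_1,\ldots,q_d)$ ($r$ positive, $s$ negative entries, $r,s\ge1$): with $r'=\max(r,s)$, $s'=\min(r,s)$, $\beta = \frac{r'}{2s'}$ if $r'\ge s'+3$, $\beta=\frac{s'+2}{2(s'-1)}$ if $r'\in\{s'+1,s'+2\}$, $\beta = \frac{s'+1}{2(s'-2)}$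 if $r'=s'$. *)

(* Defs.v *)
From Stdlib Require Import Reals List ZArith.
From Coquelicot Require Import Coquelicot.
Open Scope R_scope.

Definition rsum (d : nat) (f : nat -> R) : R :=
  fold_right Rplus 0 (map f (seq 0 d)).
Definition cprod (d : nat) (f : nat -> C) : C :=
  fold_right Cmult (RtoC 1) (map f (seq 0 d)).

Definition ee (x : R) : C := (cos (2 * PI * x), sin (2 * PI * x)).

Definition fourier (psi : R -> R) (a : R) : C :=
  @RInt_gen C_R_CompleteNormedModule (fun x => Cmult (RtoC (psi x)) (ee (- a * x)))
           (Rbar_locally m_infty) (Rbar_locally p_infty).

Definition qmax (d : nat) (q : nat -> R) : R :=
  fold_right Rmax 0 (map (fun j => Rabs (q j)) (seq 0 d)).

Definition npos (d : nat) (q : nat -> R) : nat :=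
  length (filter (fun j => if Rlt_dec 0 (q j) then true else false) (seq 0 d)).
Definition nneg (d : nat) (q : nat -> R) : nat :=
  length (filter (fun j => if Rlt_dec (q j) 0 then true else false) (seq 0 d)).

Definition beta_sig (r s : nat) : R :=
  let r' := Nat.max r s in let s' := Nat.min r s in
  if Nat.leb (s' + 3) r' then INR r' / (2 * INR s')
  else if Nat.eqb r' s' then (INR s' + 1) / (2 * (INR s' - 2))
  else (INR s' + 2) / (2 * (INR s' - 1)).

Definition Hpar (d : nat) (Cd : R) (q : nat -> R) : R :=
  Cd * Rpower (qmax d q) (/ 2 + beta_sig (npos d q) (nneg d q)).

Definition Ppar (d : nat) (Cd : R) (q : nat -> R) : R :=
  let H := Hpar d Cd q in
  exp ((1 + 10 * INR d ^ 2 / ln (ln H)) * ln H).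

Definition zsum (M : nat) (f : Z -> C) : C :=
  fold_right Cplus (RtoC 0)
    (map (fun k => f (Z.of_nat k - Z.of_nat M)%Z) (seq 0 (2 * M + 1))).

(* S_j(a) = sum_{m in Z, P < |q_j|^(1/2) m < 2 d P} e(a q_j m^2).
   Since |q_j| >= 1, every such m satisfies |m| < 2dP, so summing over
   |m| <= up(2dP) covers the whole (finite) range. *)
Definition Sj (d : nat) (P : R) (qj : R) (a : R) : C :=
  zsum (Z.to_nat (up (2 * INR d * P)))
    (fun m => if Rlt_dec P (sqrt (Rabs qj) * IZR m) then
                if Rlt_dec (sqrt (Rabs qj) * IZR m) (2 * INR d * P)
                then ee (a * qj * IZR m ^ 2) else RtoC 0
              else RtoC 0).

(* Main.v *)
Require Import Defs.
From Stdlib Require Import Reals List ZArith.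
From Coquelicot Require Import Coquelicot.
From Stdlib Require Import Lra Lia FunctionalExtensionality.
Open Scope R_scope.

Lemma cont_pt_of (f : R -> R) x : continuous f x -> continuity_pt f x.
Proof. intro H. apply continuity_pt_filterlim. exact H. Qed.

Lemma cont_of_pt (f : R -> R) x : continuity_pt f x -> continuous f x.
Proof. intro H. apply continuity_pt_filterlim. exact H. Qed.

Lemma cont2_snd (h : R -> R -> R) u x :
  continuity_2d_pt h u x -> continuous (fun t => h u t) x.
Proof.
  intro H. apply cont_of_pt. intros eps Heps.
  destruct (H (mkposreal eps Heps)) as [delta Hd].
  exists delta. split. apply cond_pos.
  intros y [_ Hy]. simpl in *. unfold R_dist in *.
  apply Hd. rewrite Rminus_eq_0, Rabs_R0. apply cond_pos. exact Hy.
Qed.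

Lemma param_deriv (h dh : R -> R -> R) (a b T : R) :
  (forall u x, is_derive (fun u => h u x) u (dh u x)) ->
  (forall u x, continuity_2d_pt dh u x) ->
  (forall u x, continuity_2d_pt h u x) ->
  is_derive (fun u => RInt (fun x => h u x) a b) T (RInt (fun x => dh T x) a b).
Proof.
  intros Hd Hc Hh.
  assert (E : forall u x, Derive (fun z => h z x) u = dh u x).
  { intros; apply is_derive_unique; apply Hd. }
  replace (RInt (fun x => dh T x) a b) with
     (RInt (fun t => Derive (fun u => h u t) T) a b).
  2:{ apply RInt_ext. intros; apply E. }
  apply is_derive_RInt_param.
  - apply filter_forall. intros; eexists; apply Hd.
  - intros. eapply continuity_2d_pt_ext. 2: apply (Hc T t). intros; simpl; rewrite E; reflexivity.
  - apply filter_forall. intros. apply (@ex_RInt_continuous R_CompleteNormedModule). intros; apply cont2_snd; apply Hh.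
Qed.

Lemma param_cont (h dh : R -> R -> R) (a b T : R) :
  (forall u x, is_derive (fun u => h u x) u (dh u x)) ->
  (forall u x, continuity_2d_pt dh u x) ->
  (forall u x, continuity_2d_pt h u x) ->
  continuous (fun u => RInt (fun x => h u x) a b) T.
Proof.
  intros. apply (@ex_derive_continuous R_AbsRing R_NormedModule). eexists. apply param_deriv; eauto.
Qed.

Section Psi.
Variable psi : R -> R.
Hypothesis Hd : forall n x, ex_derive_n psi n x.
Hypothesis Hsupp : forall x, 1 < Rabs x -> psi x = 0.

Definition Dn k := Derive_n psi k.

Lemma D_derive k x : is_derive (Dn k) x (Dn (S k) x).
Proof. apply Derive_correct. apply (Hd (S k) x). Qed.

Lemma D_cont k x : continuous (Dn k) x.
Proof. apply (@ex_derive_continuous R_AbsRing R_NormedModule). eexists. apply D_derive. Qed.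

Lemma D_cont_pt k x : continuity_pt (Dn k) x.
Proof. apply cont_pt_of, D_cont. Qed.

Lemma D_zero_out k y : 1 < Rabs y -> Dn k y = 0.
Proof.
  intro Hy. unfold Dn.
  rewrite (Derive_n_ext_loc psi (fun _ => 0)).
  - destruct k; [reflexivity| apply Derive_n_const].
  - assert (Hp : 0 < Rabs y - 1) by lra.
    exists (mkposreal _ Hp). intros t Ht. change R in t. apply Hsupp.
    change (Rabs (t - y) < Rabs y - 1) in Ht.
    pose proof (Rabs_triang_inv y (y - t)) as H. replace (y - (y - t)) with t in H by ring.
    rewrite Rabs_minus_sym in Ht. lra.
Qed.

Lemma zero_edge (f : R -> R) y : continuous f y -> (forall z, 1 < Rabs z -> f z = 0) ->
  Rabs y = 1 -> f y = 0.
Proof.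
  intros Hc Hz Hy.
  destruct (Req_dec (f y) 0) as [E|NE]; [exact E|exfalso].
  assert (He : 0 < Rabs (f y)) by (apply Rabs_pos_lt; exact NE).
  destruct (Hc (ball (f y) (mkposreal _ He))) as [delta Hdel].
  { exists (mkposreal _ He). auto. }
  pose (z := y + y * (delta / 2)).
  assert (Hzb : ball y delta z).
  { change (Rabs (z - y) < delta).
    unfold z. replace (y + y * (delta / 2) - y) with (y * (delta/2)) by ring.
    rewrite Rabs_mult, Hy, Rabs_pos_eq. pose proof (cond_pos delta). lra.
    pose proof (cond_pos delta). lra. }
  specialize (Hdel z Hzb). rewrite Hz in Hdel.
  - change (Rabs (0 - f y) < Rabs (f y)) in Hdel.
    rewrite Rminus_0_l, Rabs_Ropp in Hdel. lra.
  - unfold z. replace (y + y * (delta / 2)) with (y * (1 + delta/2)) by ring.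
    rewrite Rabs_mult, Hy, Rabs_pos_eq. pose proof (cond_pos delta). lra.
    pose proof (cond_pos delta). lra.
Qed.

Lemma D_zero k y : 1 <= Rabs y -> Dn k y = 0.
Proof.
  intro Hy. destruct (Rle_lt_or_eq_dec _ _ Hy) as [H|H].
  - apply D_zero_out; exact H.
  - apply zero_edge. apply D_cont. intros; apply D_zero_out; auto. auto.
Qed.

Lemma D_bound k : exists M, forall y, Rabs (Dn k y) <= M.
Proof.
  destruct (continuity_ab_maj (fun y => Rabs (Dn k y)) (-1) 1) as [Mx [HM _]].
  lra. intros. apply (continuity_pt_comp (Dn k) Rabs c). apply D_cont_pt. apply Rcontinuity_abs.
  exists (Rabs (Dn k Mx)). intro y.
  destruct (Rle_or_lt (Rabs y) 1) as [H|H].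
  - apply HM. apply Rabs_le_between; auto.
  - rewrite D_zero_out; auto. rewrite Rabs_R0. apply Rabs_pos.
Qed.

End Psi.

Ltac c2d := repeat first [ apply continuity_2d_pt_const | apply continuity_2d_pt_id1
  | apply continuity_2d_pt_id2 | apply continuity_2d_pt_mult | apply continuity_2d_pt_plus
  | apply continuity_2d_pt_minus | apply continuity_2d_pt_opp ].

Lemma lin_derive (F F' : R -> R) (Q t u : R) :
  (forall y, is_derive F y (F' y)) ->
  is_derive (fun u => F (Q + t * (u - Q))) u (t * F' (Q + t * (u - Q))).
Proof.
  intro H. apply (is_derive_comp F (fun u => Q + t * (u - Q))). apply H.
  auto_derive; auto; ring.
Qed.

Lemma lin_cont (F : R -> R) (Q u t : R) :
  (forall y, continuity_pt F y) ->
  continuity_2d_pt (fun u t => F (Q + t * (u - Q))) u t.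
Proof.
  intro H. apply (continuity_1d_2d_pt_comp F (fun u t => Q + t * (u - Q))). apply H.
  c2d.
Qed.

Section G.
Variable psi : R -> R.
Hypothesis Hd : forall n x, ex_derive_n psi n x.
Hypothesis Hsupp : forall x, 1 < Rabs x -> psi x = 0.
Variable Q : R.
Hypothesis HQ : psi Q = 0.

Definition g x := RInt (fun t => Dn psi 1 (Q + t * (x - Q))) 0 1.
Definition g1 x := RInt (fun t => t * Dn psi 2 (Q + t * (x - Q))) 0 1.

Lemma g_derive x : is_derive g x (g1 x).
Proof.
  apply (param_deriv (fun u t => Dn psi 1 (Q + t * (u - Q))) (fun u t => t * Dn psi 2 (Q + t * (u - Q)))).
  - intros. apply lin_derive. apply D_derive; auto.
  - intros. apply continuity_2d_pt_mult. apply continuity_2d_pt_id2. apply lin_cont. apply D_cont_pt; auto.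
  - intros. apply lin_cont. apply D_cont_pt; auto.
Qed.

Lemma g_cont x : continuous g x.
Proof. apply (@ex_derive_continuous R_AbsRing R_NormedModule). eexists. apply g_derive. Qed.

Lemma g1_cont x : continuous g1 x.
Proof.
  apply (param_cont (fun u t => t * Dn psi 2 (Q + t * (u - Q))) (fun u t => t * (t * Dn psi 3 (Q + t * (u - Q))))).
  - intros. apply is_derive_scal. apply lin_derive. apply D_derive; auto.
  - intros. apply continuity_2d_pt_mult. apply continuity_2d_pt_id2.
    apply continuity_2d_pt_mult. apply continuity_2d_pt_id2. apply lin_cont. apply D_cont_pt; auto.
  - intros. apply continuity_2d_pt_mult. apply continuity_2d_pt_id2. apply lin_cont. apply D_cont_pt; auto.
Qed.

Lemma psi_eq x : psi x = (x - Q) * g x.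
Proof.
  assert (H : is_RInt (fun t => (x - Q) * Dn psi 1 (Q + t * (x - Q))) 0 1
                (minus (psi (Q + 1 * (x - Q))) (psi (Q + 0 * (x - Q))))).
  { apply (is_RInt_derive (fun t => psi (Q + t * (x - Q)))).
    - intros t _. 
      apply (is_derive_comp psi (fun t => Q + t * (x - Q))).
      apply (D_derive psi Hd 0).
      auto_derive; auto; ring.
    - intros t _. apply cont_of_pt. 
      apply (continuity_pt_comp (fun t => Q + t * (x - Q)) (fun y => (x - Q) * Dn psi 1 y)).
      apply continuity_pt_plus. apply continuity_pt_const. intros a b; auto.
      apply continuity_pt_mult. apply continuity_pt_id. apply continuity_pt_const. intros a b; auto.
      apply continuity_pt_mult. apply continuity_pt_const. intros a b; auto. apply D_cont_pt; auto. }
  apply (is_RInt_unique (V:=R_CompleteNormedModule)) in H.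
  replace (Q + 1 * (x - Q)) with x in H by ring.
  replace (Q + 0 * (x - Q)) with Q in H by ring.
  rewrite HQ in H. unfold minus, plus, opp in H; simpl in H.
  unfold g. rewrite <- (RInt_scal (V:=R_CompleteNormedModule)).
  - simpl in H. unfold scal; simpl. unfold mult; simpl. rewrite H. ring.
  - apply (@ex_RInt_continuous R_CompleteNormedModule). intros. 
    apply cont_of_pt. apply (continuity_pt_comp (fun t => Q + t * (x - Q)) (Dn psi 1)).
    apply continuity_pt_plus. apply continuity_pt_const. intros a b; auto.
    apply continuity_pt_mult. apply continuity_pt_id. apply continuity_pt_const. intros a b; auto.
    apply D_cont_pt; auto.
Qed.

End G.

Lemma ex_RInt_c (f : R -> R) a b : (forall z, continuous f z) -> ex_RInt f a b.
Proof. intros. apply (@ex_RInt_continuous R_CompleteNormedModule). auto. Qed.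

Lemma cmult (f h : R -> R) z : continuous f z -> continuous h z -> continuous (fun x => f x * h x) z.
Proof. intros. apply (continuous_mult f h); auto. Qed.

Lemma ccomp (f h : R -> R) z : continuous h z -> continuous f (h z) -> continuous (fun x => f (h x)) z.
Proof. intros. apply (continuous_comp h f); auto. Qed.

Lemma dcont (f : R -> R) z : ex_derive f z -> continuous f z.
Proof. intros. apply (@ex_derive_continuous R_AbsRing R_NormedModule). auto. Qed.

Section RL.
Variable psi : R -> R.
Hypothesis Hd : forall n x, ex_derive_n psi n x.
Hypothesis Hsupp : forall x, 1 < Rabs x -> psi x = 0.
Variable Q : R.
Hypothesis HQ : psi Q = 0.

Let gg := g psi Q.
Let gg1 := g1 psi Q.

Lemma g_bound : exists M, forall x, Rabs (gg x) <= M.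
Proof.
  destruct (D_bound psi Hd Hsupp 1) as [M HM]. exists M. intro x.
  unfold gg, g. replace M with ((1 - 0) * M) by ring.
  apply abs_RInt_le_const. lra.
  apply ex_RInt_c. intro z. apply (ccomp (Dn psi 1) (fun t => Q + t * (x - Q))).
  apply dcont; auto_derive; auto. apply D_cont; auto.
  intros; apply HM.
Qed.

Lemma g1_bound : exists M, forall x, Rabs (gg1 x) <= M.
Proof.
  destruct (D_bound psi Hd Hsupp 2) as [M HM]. exists M. intro x.
  unfold gg1, g1. replace M with ((1 - 0) * M) by ring.
  apply abs_RInt_le_const. lra.
  apply ex_RInt_c. intro z. apply (cmult (fun t => t)). apply dcont; auto_derive; auto.
  apply (ccomp (Dn psi 2) (fun t => Q + t * (x - Q))).
  apply dcont; auto_derive; auto. apply D_cont; auto.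
  intros t Ht. rewrite Rabs_mult. replace M with (1 * M) by ring.
  apply Rmult_le_compat. apply Rabs_pos. apply Rabs_pos. rewrite Rabs_pos_eq; lra. apply HM.
Qed.

Definition As T := RInt (fun x => gg x * sin (2 * PI * T * (Q - x))) (-1) 1.
Definition Bc T := RInt (fun x => gg x * cos (2 * PI * T * (Q - x))) (-1) 1.


Lemma gg_derive x : is_derive gg x (gg1 x).
Proof. apply g_derive; auto. Qed.

Lemma gg_cont x : continuous gg x.
Proof. apply g_cont; auto. Qed.

Lemma gg1_cont x : continuous gg1 x.
Proof. apply g1_cont; auto. Qed.

Lemma trig_cont (f : R -> R) c z : (forall y, continuous f y) -> continuous (fun x => f (c * (Q - x))) z.
Proof. intros H. apply (ccomp f (fun x => c * (Q - x))). apply dcont; auto_derive; auto. apply H. Qed.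

Lemma cos_c y : continuous cos y.
Proof. apply dcont; auto_derive; auto. Qed.
Lemma sin_c y : continuous sin y.
Proof. apply dcont; auto_derive; auto. Qed.

Lemma As_bound : exists C, forall T, 0 < T -> Rabs (As T) <= C / T.
Proof.
  destruct g_bound as [M1 H1]. destruct g1_bound as [M2 H2].
  exists ((M1 + M1 + 2 * M2) / (2 * PI)). intros T HT.
  pose (F x := gg x * cos (2 * PI * T * (Q - x))).
  pose (dF x := gg1 x * cos (2 * PI * T * (Q - x)) + 2 * PI * T * (gg x * sin (2 * PI * T * (Q - x)))).
  assert (HI : is_RInt dF (-1) 1 (minus (F 1) (F (-1)))).
  { apply (is_RInt_derive (V:=R_CompleteNormedModule) F dF).
    - intros x _. unfold F, dF. auto_derive. eexists; apply gg_derive.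
      replace (Derive (fun x => gg x) x) with (gg1 x) by (symmetry; apply is_derive_unique; apply gg_derive).
      unfold Rminus. ring.
    - intros x _. unfold dF. apply (continuous_plus (V:=R_NormedModule)).
      apply cmult. apply gg1_cont. apply (trig_cont cos (2 * PI * T)). apply cos_c.
      apply cmult. apply continuous_const. apply cmult. apply gg_cont.
      apply (trig_cont sin (2 * PI * T)). apply sin_c. }
  apply (is_RInt_unique (V:=R_CompleteNormedModule)) in HI.
  assert (E1 : ex_RInt (fun x => gg1 x * cos (2 * PI * T * (Q - x))) (-1) 1).
  { apply ex_RInt_c. intro z. apply cmult. apply gg1_cont. apply (trig_cont cos (2 * PI * T)). apply cos_c. }
  assert (E2 : ex_RInt (fun x => gg x * sin (2 * PI * T * (Q - x))) (-1) 1).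
  { apply ex_RInt_c. intro z. apply cmult. apply gg_cont. apply (trig_cont sin (2 * PI * T)). apply sin_c. }
  assert (HS : RInt dF (-1) 1 = RInt (fun x => gg1 x * cos (2 * PI * T * (Q - x))) (-1) 1 + 2 * PI * T * As T).
  { unfold dF, As. 
    rewrite (RInt_plus (V:=R_CompleteNormedModule) (fun x => gg1 x * cos (2 * PI * T * (Q - x)))
              (fun x => 2 * PI * T * (gg x * sin (2 * PI * T * (Q - x))))); auto.
    rewrite (RInt_scal (V:=R_CompleteNormedModule) (fun x => gg x * sin (2 * PI * T * (Q - x)))); auto.
    apply (ex_RInt_scal (V:=R_NormedModule) (fun x => gg x * sin (2 * PI * T * (Q - x)))); auto. }
  assert (HB1 : Rabs (RInt (fun x => gg1 x * cos (2 * PI * T * (Q - x))) (-1) 1) <= (1 - -1) * M2).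
  { apply abs_RInt_le_const; auto. lra. intros t _. rewrite Rabs_mult.
    replace M2 with (M2 * 1) by ring. apply Rmult_le_compat; try apply Rabs_pos. auto. apply Rabs_le. apply COS_bound. }
  assert (HF1 : Rabs (F 1) <= M1).
  { unfold F. rewrite Rabs_mult. replace M1 with (M1 * 1) by ring.
    apply Rmult_le_compat; try apply Rabs_pos. auto. apply Rabs_le. apply COS_bound. }
  assert (HF2 : Rabs (F (-1)) <= M1).
  { unfold F. rewrite Rabs_mult. replace M1 with (M1 * 1) by ring.
    apply Rmult_le_compat; try apply Rabs_pos. auto. apply Rabs_le. apply COS_bound. }
  set (I1 := RInt (fun x => gg1 x * cos (2 * PI * T * (Q - x))) (-1) 1) in *.
  change (minus (F 1) (F (-1))) with (F 1 - F (-1)) in HI.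
  assert (HS2 : F 1 - F (-1) = I1 + 2 * PI * T * As T :> R) by (rewrite <- HI; exact HS).
  assert (Hk : 2 * PI * T * As T = F 1 - F (-1) - I1) by (rewrite HS2; ring).
  assert (HP : 0 < 2 * PI * T) by (pose proof PI_RGT_0; nra).
  apply (Rmult_le_reg_l (2 * PI * T)); auto.
  replace (2 * PI * T * ((M1 + M1 + 2 * M2) / (2 * PI) / T)) with (M1 + M1 + 2 * M2) by (pose proof PI_RGT_0; field; split; lra).
  rewrite <- (Rabs_pos_eq (2 * PI * T)) by lra. rewrite <- Rabs_mult, Hk.
  unfold Rminus. eapply Rle_trans. apply Rabs_triang. rewrite Rabs_Ropp.
  eapply Rle_trans. apply Rplus_le_compat_r. apply Rabs_triang. rewrite Rabs_Ropp. lra.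
Qed.

Lemma Bc_bound : exists C, forall T, 0 < T -> Rabs (Bc T) <= C / T.
Proof.
  destruct g_bound as [M1 H1]. destruct g1_bound as [M2 H2].
  exists ((M1 + M1 + 2 * M2) / (2 * PI)). intros T HT.
  pose (F x := gg x * sin (2 * PI * T * (Q - x))).
  pose (dF x := gg1 x * sin (2 * PI * T * (Q - x)) - 2 * PI * T * (gg x * cos (2 * PI * T * (Q - x)))).
  assert (HI : is_RInt dF (-1) 1 (minus (F 1) (F (-1)))).
  { apply (is_RInt_derive (V:=R_CompleteNormedModule) F dF).
    - intros x _. unfold F, dF. auto_derive. eexists; apply gg_derive.
      replace (Derive (fun x => gg x) x) with (gg1 x) by (symmetry; apply is_derive_unique; apply gg_derive).
      unfold Rminus. ring.
    - intros x _. unfold dF. apply (continuous_plus (V:=R_NormedModule)).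
      apply cmult. apply gg1_cont. apply (trig_cont sin (2 * PI * T)). apply sin_c.
      apply (continuous_opp (V:=R_NormedModule)).
      apply cmult. apply continuous_const. apply cmult. apply gg_cont.
      apply (trig_cont cos (2 * PI * T)). apply cos_c. }
  apply (is_RInt_unique (V:=R_CompleteNormedModule)) in HI.
  assert (E1 : ex_RInt (fun x => gg1 x * sin (2 * PI * T * (Q - x))) (-1) 1).
  { apply ex_RInt_c. intro z. apply cmult. apply gg1_cont. apply (trig_cont sin (2 * PI * T)). apply sin_c. }
  assert (E2 : ex_RInt (fun x => gg x * cos (2 * PI * T * (Q - x))) (-1) 1).
  { apply ex_RInt_c. intro z. apply cmult. apply gg_cont. apply (trig_cont cos (2 * PI * T)). apply cos_c. }
  assert (HS : RInt dF (-1) 1 = RInt (fun x => gg1 x * sin (2 * PI * T * (Q - x))) (-1) 1 - 2 * PI * T * Bc T).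
  { unfold dF, Bc. 
    rewrite (RInt_minus (V:=R_CompleteNormedModule) (fun x => gg1 x * sin (2 * PI * T * (Q - x)))
              (fun x => 2 * PI * T * (gg x * cos (2 * PI * T * (Q - x))))); auto.
    rewrite (RInt_scal (V:=R_CompleteNormedModule) (fun x => gg x * cos (2 * PI * T * (Q - x)))); auto.
    apply (ex_RInt_scal (V:=R_NormedModule) (fun x => gg x * cos (2 * PI * T * (Q - x)))); auto. }
  assert (HB1 : Rabs (RInt (fun x => gg1 x * sin (2 * PI * T * (Q - x))) (-1) 1) <= (1 - -1) * M2).
  { apply abs_RInt_le_const; auto. lra. intros t _. rewrite Rabs_mult.
    replace M2 with (M2 * 1) by ring. apply Rmult_le_compat; try apply Rabs_pos. auto. apply Rabs_le. apply SIN_bound. }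
  assert (HF1 : Rabs (F 1) <= M1).
  { unfold F. rewrite Rabs_mult. replace M1 with (M1 * 1) by ring.
    apply Rmult_le_compat; try apply Rabs_pos. auto. apply Rabs_le. apply SIN_bound. }
  assert (HF2 : Rabs (F (-1)) <= M1).
  { unfold F. rewrite Rabs_mult. replace M1 with (M1 * 1) by ring.
    apply Rmult_le_compat; try apply Rabs_pos. auto. apply Rabs_le. apply SIN_bound. }
  set (I1 := RInt (fun x => gg1 x * sin (2 * PI * T * (Q - x))) (-1) 1) in *.
  change (minus (F 1) (F (-1))) with (F 1 - F (-1)) in HI.
  assert (HS2 : F 1 - F (-1) = I1 - 2 * PI * T * Bc T :> R) by (rewrite <- HI; exact HS).
  assert (Hk : 2 * PI * T * Bc T = I1 - (F 1 - F (-1))) by (rewrite HS2; ring).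
  assert (HP : 0 < 2 * PI * T) by (pose proof PI_RGT_0; nra).
  apply (Rmult_le_reg_l (2 * PI * T)); auto.
  replace (2 * PI * T * ((M1 + M1 + 2 * M2) / (2 * PI) / T)) with (M1 + M1 + 2 * M2) by (pose proof PI_RGT_0; field; split; lra).
  rewrite <- (Rabs_pos_eq (2 * PI * T)) by lra. rewrite <- Rabs_mult, Hk.
  unfold Rminus. eapply Rle_trans. apply Rabs_triang. rewrite Rabs_Ropp.
  eapply Rle_trans. apply Rplus_le_compat_l. apply Rabs_triang. rewrite Rabs_Ropp. lra.
Qed.

End RL.

Section Main.
Variable psi : R -> R.
Hypothesis Hd : forall n x, ex_derive_n psi n x.
Hypothesis Hsupp : forall x, 1 < Rabs x -> psi x = 0.
Variable Q : R.
Hypothesis HQ : psi Q = 0.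

Let gg := g psi Q.

Lemma gg_cpt x : continuity_pt gg x.
Proof. apply cont_pt_of. apply g_cont; auto. Qed.
Lemma psi_cpt x : continuity_pt psi x.
Proof. apply (D_cont_pt psi Hd 0). Qed.

Ltac c2 := repeat first [ apply continuity_2d_pt_const | apply continuity_2d_pt_id1
  | apply continuity_2d_pt_id2 | apply continuity_2d_pt_mult | apply continuity_2d_pt_plus
  | apply continuity_2d_pt_minus | apply continuity_2d_pt_opp
  | apply (continuity_1d_2d_pt_comp cos); [apply continuity_cos|]
  | apply (continuity_1d_2d_pt_comp sin); [apply continuity_sin|]
  | apply (continuity_1d_2d_pt_comp gg); [apply gg_cpt|]
  | apply (continuity_1d_2d_pt_comp psi); [apply psi_cpt|] ].

Definition Rc T := RInt (fun x => psi x * cos (2 * PI * T * (Q - x))) (-1) 1.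
Definition Js T := RInt (fun x => psi x * sin (2 * PI * T * (Q - x))) (-1) 1.

Lemma As_derive T : is_derive (As psi Q) T (-(2 * PI) * Rc T).
Proof.
  assert (H := param_deriv (fun u x => gg x * sin (2 * PI * u * (Q - x)))
     (fun u x => gg x * (2 * PI * (Q - x) * cos (2 * PI * u * (Q - x)))) (-1) 1 T).
  replace (-(2 * PI) * Rc T) with (RInt (fun x => gg x * (2 * PI * (Q - x) * cos (2 * PI * T * (Q - x)))) (-1) 1).
  apply H.
  - intros. auto_derive; auto. ring.
  - intros. c2.
  - intros. c2.
  - unfold Rc. rewrite <- (RInt_scal (V:=R_CompleteNormedModule)).
    apply RInt_ext. intros x _. rewrite (psi_eq psi Hd Q HQ x). unfold scal; simpl; unfold mult; simpl. fold gg. ring.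
    apply ex_RInt_c. intro z. apply cmult. apply cont_of_pt, psi_cpt.
    apply (trig_cont Q cos (2 * PI * T)). apply cos_c.
Qed.

Lemma Bc_derive T : is_derive (Bc psi Q) T (2 * PI * Js T).
Proof.
  assert (H := param_deriv (fun u x => gg x * cos (2 * PI * u * (Q - x)))
     (fun u x => gg x * (- (2 * PI * (Q - x)) * sin (2 * PI * u * (Q - x)))) (-1) 1 T).
  replace (2 * PI * Js T) with (RInt (fun x => gg x * (- (2 * PI * (Q - x)) * sin (2 * PI * T * (Q - x)))) (-1) 1).
  apply H.
  - intros. auto_derive; auto. ring.
  - intros. c2.
  - intros. c2.
  - unfold Js. rewrite <- (RInt_scal (V:=R_CompleteNormedModule)).
    apply RInt_ext. intros x _. rewrite (psi_eq psi Hd Q HQ x). unfold scal; simpl; unfold mult; simpl. fold gg. ring.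
    apply ex_RInt_c. intro z. apply cmult. apply cont_of_pt, psi_cpt.
    apply (trig_cont Q sin (2 * PI * T)). apply sin_c.
Qed.

Lemma Rc_cont T : continuous Rc T.
Proof.
  apply (param_cont (fun u x => psi x * cos (2 * PI * u * (Q - x)))
     (fun u x => psi x * (- (2 * PI * (Q - x)) * sin (2 * PI * u * (Q - x))))).
  - intros. auto_derive; auto. ring.
  - intros. c2.
  - intros. c2.
Qed.

Lemma Js_cont T : continuous Js T.
Proof.
  apply (param_cont (fun u x => psi x * sin (2 * PI * u * (Q - x)))
     (fun u x => psi x * ((2 * PI * (Q - x)) * cos (2 * PI * u * (Q - x))))).
  - intros. auto_derive; auto. ring.
  - intros. c2.
  - intros. c2.
Qed.

End Main.

Lemma lim_C (f1 f2 : R -> R) l1 l2 C1 C2 :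
  (forall T, 0 < T -> Rabs (f1 T - l1) <= C1 / T) ->
  (forall T, 0 < T -> Rabs (f2 T - l2) <= C2 / T) ->
  filterlim (fun T => ((f1 T, f2 T) : C)) (Rbar_locally p_infty) (locally ((l1, l2) : C)).
Proof.
  intros H1 H2 P [eps HP].
  exists (Rmax 1 ((Rabs C1 + Rabs C2) / eps)). intros T HT.
  assert (HT1 : 1 < T) by (eapply Rle_lt_trans; [apply Rmax_l|exact HT]).
  assert (HT2 : (Rabs C1 + Rabs C2) / eps < T) by (eapply Rle_lt_trans; [apply Rmax_r|exact HT]).
  pose proof (cond_pos eps) as He.
  assert (K : forall c, Rabs c <= Rabs C1 + Rabs C2 -> c / T < eps).
  { intros c Hc. apply (Rmult_lt_reg_r T). lra. unfold Rdiv. rewrite Rmult_assoc, Rinv_l by lra.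
    rewrite Rmult_1_r. apply (Rmult_lt_compat_r eps) in HT2; auto.
    unfold Rdiv in HT2. rewrite Rmult_assoc, Rinv_l in HT2 by lra.
    pose proof (Rle_abs c). lra. }
  apply HP. split.
  - change (Rabs (f1 T - l1) < eps). eapply Rle_lt_trans. apply H1; lra. apply K.
    pose proof (Rabs_pos C2). pose proof (Rle_abs C1). lra.
  - change (Rabs (f2 T - l2) < eps). eapply Rle_lt_trans. apply H2; lra. apply K.
    pose proof (Rabs_pos C1). pose proof (Rle_abs C2). lra.
Qed.

Lemma gen_of_family (f : R -> C) (F : R -> C) l :
  (forall b, is_RInt (V:=C_R_NormedModule) f 0 b (F b)) ->
  filterlim F (Rbar_locally p_infty) (locally l) ->
  is_RInt_gen (V:=C_R_NormedModule) f (at_point 0) (Rbar_locally p_infty) l.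
Proof.
  intros HI HF P HP.
  apply (Filter_prod _ _ _ (fun a => a = 0) (fun b => P (F b))).
  - reflexivity.
  - apply HF. exact HP.
  - intros a b -> Hb. exists (F b). split; auto.
Qed.

Section Main2.
Variable psi : R -> R.
Hypothesis Hd : forall n x, ex_derive_n psi n x.
Hypothesis Hsupp : forall x, 1 < Rabs x -> psi x = 0.
Variable Q : R.
Hypothesis HQ : psi Q = 0.

Lemma As0 : As psi Q 0 = 0.
Proof.
  unfold As. rewrite (RInt_ext _ (fun _ => 0)).
  rewrite (RInt_const (V:=R_CompleteNormedModule)). apply (scal_zero_r (V:=R_NormedModule)).
  intros x _. rewrite !Rmult_0_r, Rmult_0_l, sin_0, Rmult_0_r. reflexivity.
Qed.

Lemma Bc0_is : True. Proof. exact I. Qed.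

Lemma Rc_int T : is_RInt (Rc psi Q) 0 T (-(As psi Q T) / (2 * PI)).
Proof.
  pose proof PI_RGT_0 as Hpi.
  assert (H := is_RInt_derive (V:=R_CompleteNormedModule) (fun u => -(As psi Q u) / (2 * PI)) (Rc psi Q) 0 T).
  replace (-(As psi Q T) / (2 * PI)) with (minus (-(As psi Q T) / (2 * PI)) (-(As psi Q 0) / (2 * PI))).
  apply H.
  - intros x _. 
    assert (H2 := is_derive_scal _ _ (-/(2*PI)) _ (As_derive psi Hd Q HQ x)).
    replace (Rc psi Q x) with (scal (-/(2*PI)) (-(2 * PI) * Rc psi Q x)).
    eapply is_derive_ext; [|exact H2]. intros; simpl. unfold scal; simpl; unfold mult; simpl. field. lra.
    unfold scal; simpl; unfold mult; simpl. field. lra.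
  - intros. apply Rc_cont; auto.
  - rewrite As0. unfold minus, plus, opp; simpl. field. lra.
Qed.

Lemma Js_int T : is_RInt (Js psi Q) 0 T ((Bc psi Q T - Bc psi Q 0) / (2 * PI)).
Proof.
  pose proof PI_RGT_0 as Hpi.
  assert (H := is_RInt_derive (V:=R_CompleteNormedModule) (fun u => (Bc psi Q u) / (2 * PI)) (Js psi Q) 0 T).
  replace ((Bc psi Q T - Bc psi Q 0) / (2 * PI)) with (minus ((Bc psi Q T) / (2 * PI)) ((Bc psi Q 0) / (2 * PI))).
  apply H.
  - intros x _. 
    assert (H2 := is_derive_scal _ _ (/(2*PI)) _ (Bc_derive psi Hd Q HQ x)).
    replace (Js psi Q x) with (scal (/(2*PI)) (2 * PI * Js psi Q x)).
    eapply is_derive_ext; [|exact H2]. intros; simpl. unfold scal; simpl; unfold mult; simpl. field. lra.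
    unfold scal; simpl; unfold mult; simpl. field. lra.
  - intros. apply Js_cont; auto.
  - unfold minus, plus, opp; simpl. field. lra.
Qed.

Lemma core_pair : exists l : C,
  is_RInt_gen (V:=C_R_NormedModule) (fun a => ((Rc psi Q a, Js psi Q a) : C)) (at_point 0) (Rbar_locally p_infty) l
  /\ fst l = 0.
Proof.
  pose proof PI_RGT_0 as Hpi.
  exists ((0, - Bc psi Q 0 / (2 * PI)) : C). split; [|reflexivity].
  apply (gen_of_family _ (fun T => ((-(As psi Q T) / (2 * PI), (Bc psi Q T - Bc psi Q 0) / (2 * PI)) : C))).
  - intro b. apply (is_RInt_fct_extend_pair (U:=R_NormedModule) (V:=R_NormedModule)). apply Rc_int. apply Js_int.
  - destruct (As_bound psi Hd Hsupp Q) as [C1 HC1].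
    destruct (Bc_bound psi Hd Hsupp Q) as [C2 HC2].
    apply (lim_C _ _ _ _ (C1 / (2 * PI)) (C2 / (2 * PI))).
    + intros T HT. replace (- As psi Q T / (2 * PI) - 0) with (- (As psi Q T) / (2 * PI)) by ring.
      unfold Rdiv. rewrite Rabs_mult, Rabs_Ropp, (Rabs_pos_eq (/ (2 * PI))).
      replace (C1 * / (2 * PI) * / T) with (C1 / T * / (2 * PI)) by (field; lra).
      apply Rmult_le_compat_r. apply Rlt_le, Rinv_0_lt_compat; lra. apply HC1; auto.
      apply Rlt_le, Rinv_0_lt_compat; lra.
    + intros T HT. replace ((Bc psi Q T - Bc psi Q 0) / (2 * PI) - - Bc psi Q 0 / (2 * PI)) with ((Bc psi Q T) / (2 * PI)) by (field; lra).
      unfold Rdiv. rewrite Rabs_mult, (Rabs_pos_eq (/ (2 * PI))).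
      replace (C2 * / (2 * PI) * / T) with (C2 / T * / (2 * PI)) by (field; lra).
      apply Rmult_le_compat_r. apply Rlt_le, Rinv_0_lt_compat; lra. apply HC2; auto.
      apply Rlt_le, Rinv_0_lt_compat; lra.
Qed.

End Main2.

Lemma lin_minus (f1 f2 : R -> R) c s a b : ex_RInt f1 a b -> ex_RInt f2 a b ->
  RInt (fun x => c * f1 x - s * f2 x) a b = c * RInt f1 a b - s * RInt f2 a b.
Proof.
  intros H1 H2.
  rewrite (RInt_minus (V:=R_CompleteNormedModule) (fun x => c * f1 x) (fun x => s * f2 x)).
  rewrite (RInt_scal (V:=R_CompleteNormedModule) f1), (RInt_scal (V:=R_CompleteNormedModule) f2); auto.
  apply (ex_RInt_scal (V:=R_NormedModule) f1); auto.
  apply (ex_RInt_scal (V:=R_NormedModule) f2); auto.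
Qed.

Lemma lin_plus (f1 f2 : R -> R) c s a b : ex_RInt f1 a b -> ex_RInt f2 a b ->
  RInt (fun x => c * f1 x + s * f2 x) a b = c * RInt f1 a b + s * RInt f2 a b.
Proof.
  intros H1 H2.
  rewrite (RInt_plus (V:=R_CompleteNormedModule) (fun x => c * f1 x) (fun x => s * f2 x)).
  rewrite (RInt_scal (V:=R_CompleteNormedModule) f1), (RInt_scal (V:=R_CompleteNormedModule) f2); auto.
  apply (ex_RInt_scal (V:=R_NormedModule) f1); auto.
  apply (ex_RInt_scal (V:=R_NormedModule) f2); auto.
Qed.

Section Four.
Variable psi : R -> R.
Hypothesis Hd : forall n x, ex_derive_n psi n x.
Hypothesis Hsupp : forall x, 1 < Rabs x -> psi x = 0.

Definition Kc a := RInt (fun x => psi x * cos (2 * PI * (- a * x))) (-1) 1.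
Definition Ks a := RInt (fun x => psi x * sin (2 * PI * (- a * x))) (-1) 1.

Lemma psi_c x : continuous psi x.
Proof. apply (D_cont psi Hd 0). Qed.

Lemma exK (h : R -> R) a : (forall y, continuous h y) -> ex_RInt (fun x => psi x * h (2 * PI * (- a * x))) (-1) 1.
Proof.
  intros Hh. apply ex_RInt_c. intro z. apply cmult. apply psi_c.
  apply (ccomp h (fun x => 2 * PI * (- a * x))). apply dcont; auto_derive; auto. apply Hh.
Qed.

Lemma zero_R a b : is_RInt (V:=R_NormedModule) (fun _ => 0) a b 0.
Proof.
  pose proof (is_RInt_const (V:=R_NormedModule) a b 0) as Hc.
  change (is_RInt (V:=R_NormedModule) (fun _ => 0) a b ((b - a) * 0)) in Hc.
  rewrite Rmult_0_r in Hc. exact Hc.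
Qed.

Lemma zero_piece (f : R -> C) a b : (forall x, Rmin a b < x < Rmax a b -> f x = (0,0)) ->
  is_RInt (V:=C_R_NormedModule) f a b ((0,0) : C).
Proof.
  intros H. apply (is_RInt_fct_extend_pair (U:=R_NormedModule) (V:=R_NormedModule)).
  - apply (is_RInt_ext (V:=R_NormedModule) (fun _ => 0)). intros x Hx. rewrite H; auto. apply zero_R.
  - apply (is_RInt_ext (V:=R_NormedModule) (fun _ => 0)). intros x Hx. rewrite H; auto. apply zero_R.
Qed.

Lemma fourier_eq a : fourier psi a = ((Kc a, Ks a) : C).
Proof.
  unfold fourier.
  apply (is_RInt_gen_unique (V:=C_R_CompleteNormedModule)).
  intros P HP.
  apply (Filter_prod _ _ _ (fun x => x < -1) (fun y => 1 < y)).
  - exists (-1). auto.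
  - exists 1. auto.
  - intros x y Hx Hy. exists ((Kc a, Ks a) : C). split.
    2:{ apply locally_singleton. exact HP. }
    idtac "A".
    set (f := fun x => Cmult (RtoC (psi x)) (ee (- a * x))).
    assert (Hz : forall u, 1 < Rabs u -> f u = (0,0)).
    { intros u Hu. unfold f. rewrite (Hsupp u Hu). unfold Cmult, RtoC, ee; simpl. f_equal; ring. }
    replace ((Kc a, Ks a) : C) with (plus (plus ((0,0) : C) ((Kc a, Ks a) : C)) ((0,0):C)).
    apply (is_RInt_Chasles (V:=C_R_NormedModule) f x 1 y).
    apply (is_RInt_Chasles (V:=C_R_NormedModule) f x (-1) 1).
    + apply zero_piece. intros u Hu. apply Hz. rewrite Rmin_left, Rmax_right in Hu by lra.
      rewrite Rabs_left by lra. lra.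
    + apply (is_RInt_fct_extend_pair (U:=R_NormedModule) (V:=R_NormedModule)).
      * apply (is_RInt_ext (V:=R_NormedModule) (fun x => psi x * cos (2 * PI * (- a * x)))).
        intros; unfold f, Cmult, RtoC, ee; simpl; ring.
        apply (RInt_correct (V:=R_CompleteNormedModule)). apply exK. apply cos_c.
      * apply (is_RInt_ext (V:=R_NormedModule) (fun x => psi x * sin (2 * PI * (- a * x)))).
        intros; unfold f, Cmult, RtoC, ee; simpl; ring.
        apply (RInt_correct (V:=R_CompleteNormedModule)). apply exK. apply sin_c.
    + apply zero_piece. intros u Hu. apply Hz. rewrite Rmin_left, Rmax_right in Hu by lra.
      rewrite Rabs_right by lra. lra.
    + change ((0 + Kc a + 0, 0 + Ks a + 0) = (Kc a, Ks a)). rewrite !Rplus_0_l, !Rplus_0_r; reflexivity.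
Qed.

End Four.

Section Core.
Variable psi : R -> R.
Hypothesis Hd : forall n x, ex_derive_n psi n x.
Hypothesis Hsupp : forall x, 1 < Rabs x -> psi x = 0.

Lemma core Q : psi Q = 0 -> exists l : C,
  is_RInt_gen (V:=C_R_NormedModule) (fun a => Cmult (ee (a * Q)) (fourier psi a)) (at_point 0) (Rbar_locally p_infty) l
  /\ fst l = 0.
Proof.
  intro HQ. destruct (core_pair psi Hd Hsupp Q HQ) as [l [H1 H2]]. exists l. split; auto.
  replace (fun a => Cmult (ee (a * Q)) (fourier psi a)) with (fun a => ((Rc psi Q a, Js psi Q a) : C)).
  exact H1.
  apply functional_extensionality. intro a. rewrite (fourier_eq psi Hd Hsupp a).
  unfold Cmult, ee. cbn [fst snd]. f_equal.
  - unfold Rc, Kc, Ks. rewrite <- lin_minus. apply RInt_ext. intros x _. match goal with |- ?x = ?y => change (@eq R x y) end.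
    replace (2 * PI * a * (Q - x)) with (2 * PI * (a * Q) + 2 * PI * (- a * x)) by ring.
    rewrite cos_plus. ring.
    apply exK; auto. apply cos_c. apply exK; auto. apply sin_c.
  - unfold Js, Kc, Ks. rewrite <- lin_plus. apply RInt_ext. intros x _. match goal with |- ?x = ?y => change (@eq R x y) end.
    replace (2 * PI * a * (Q - x)) with (2 * PI * (a * Q) + 2 * PI * (- a * x)) by ring.
    rewrite sin_plus. ring.
    apply exK; auto. apply sin_c. apply exK; auto. apply cos_c.
Qed.

End Core.

Definition sumee (L : list R) (a : R) : C :=
  fold_right Cplus (RtoC 0) (map (fun v => ee (a * v)) L).

Lemma ee_add u w : ee (u + w) = Cmult (ee u) (ee w).
Proof.
  unfold ee, Cmult. cbn [fst snd].
  rewrite Rmult_plus_distr_l, cos_plus, sin_plus. f_equal; ring.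
Qed.

Lemma sumee_app L1 L2 a : sumee (L1 ++ L2) a = Cplus (sumee L1 a) (sumee L2 a).
Proof.
  induction L1 as [|x L1 IH]; simpl.
  - unfold sumee; simpl. rewrite Cplus_0_l. reflexivity.
  - unfold sumee in *; simpl. rewrite IH. apply Cplus_assoc.
Qed.

Lemma sumee_shift x L a : Cmult (ee (a * x)) (sumee L a) = sumee (map (fun y => x + y) L) a.
Proof.
  induction L as [|y L IH].
  - unfold sumee; simpl. apply Cmult_0_r.
  - unfold sumee in *; simpl. rewrite Cmult_plus_distr_l, IH.
    rewrite Rmult_plus_distr_l, ee_add. reflexivity.
Qed.

Lemma sumee_mult L1 L2 a :
  Cmult (sumee L1 a) (sumee L2 a) = sumee (flat_map (fun x => map (fun y => x + y) L2) L1) a.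
Proof.
  induction L1 as [|x L1 IH].
  - unfold sumee; simpl. apply Cmult_0_l.
  - simpl. rewrite sumee_app, <- IH, <- sumee_shift.
    unfold sumee; simpl. apply Cmult_plus_distr_r.
Qed.

Lemma fold_mult_gen (l : list C) z : fold_right Cmult z l = Cmult (fold_right Cmult (RtoC 1) l) z.
Proof.
  induction l as [|x l IH]; simpl. rewrite Cmult_1_l; reflexivity.
  rewrite IH. apply Cmult_assoc.
Qed.

Lemma cprod_S k f : cprod (S k) f = Cmult (cprod k f) (f k).
Proof.
  unfold cprod. rewrite seq_S, map_app, fold_right_app. simpl.
  rewrite fold_mult_gen, Cmult_1_r. reflexivity.
Qed.

Lemma fold_plus_gen (l : list R) z : fold_right Rplus z l = fold_right Rplus 0 l + z.
Proof.
  induction l as [|x l IH]; simpl. ring. rewrite IH. ring.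
Qed.

Lemma rsum_S k f : rsum (S k) f = rsum k f + f k.
Proof.
  unfold rsum. rewrite seq_S, map_app, fold_right_app. simpl.
  rewrite fold_plus_gen. ring.
Qed.

Lemma rsum_ext k f h : (forall j, (j < k)%nat -> f j = h j) -> rsum k f = rsum k h.
Proof.
  induction k as [|k IH]; intros H. reflexivity.
  rewrite !rsum_S, IH, H; auto.
Qed.

Definition cond (d : nat) (P qj : R) (m : Z) : Prop :=
  P < sqrt (Rabs qj) * IZR m < 2 * INR d * P.

Lemma Sj_expand d P qj : exists L, (forall a, Sj d P qj a = sumee L a) /\
  forall v, In v L -> exists m, v = qj * IZR m ^ 2 /\ cond d P qj m.
Proof.
  unfold Sj, zsum.
  set (M := Z.to_nat (up (2 * INR d * P))).
  generalize (seq 0 (2 * M + 1)). intro ns.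
  induction ns as [|n ns IH].
  - exists nil. split. intros; reflexivity. intros v [].
  - destruct IH as [L [HL HM]]. simpl.
    set (m := (Z.of_nat n - Z.of_nat M)%Z).
    destruct (Rlt_dec P (sqrt (Rabs qj) * IZR m)) as [H1|H1].
    + destruct (Rlt_dec (sqrt (Rabs qj) * IZR m) (2 * INR d * P)) as [H2|H2].
      * exists (qj * IZR m ^ 2 :: L). split.
        -- intro a. rewrite HL. unfold sumee; simpl. rewrite Rmult_assoc. reflexivity.
        -- intros v [Hv|Hv]. exists m. split; auto. split; auto. auto.
      * exists L. split; auto. intro a. rewrite HL. apply Cplus_0_l.
    + exists L. split; auto. intro a. rewrite HL. apply Cplus_0_l.
Qed.

Lemma cprod_expand d P (q : nat -> R) k : exists L,
  (forall a, cprod k (fun j => Sj d P (q j) a) = sumee L a) /\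
  forall v, In v L -> exists m : nat -> Z, v = rsum k (fun j => q j * IZR (m j) ^ 2) /\
     forall j, (j < k)%nat -> cond d P (q j) (m j).
Proof.
  induction k as [|k IH].
  - exists (0 :: nil). split.
    + intro a. unfold cprod, sumee; simpl. rewrite Rmult_0_r. unfold ee.
      rewrite Rmult_0_r, cos_0, sin_0. unfold RtoC. unfold Cplus. cbn [fst snd]. f_equal; ring.
    + intros v [Hv|[]]. exists (fun _ => 0%Z). split. rewrite <- Hv. reflexivity. intros; lia.
  - destruct IH as [L1 [H1 M1]]. destruct (Sj_expand d P (q k)) as [L2 [H2 M2]].
    exists (flat_map (fun x => map (fun y => x + y) L2) L1). split.
    + intro a. rewrite cprod_S, H1, H2. apply sumee_mult.
    + intros v Hv. apply in_flat_map in Hv. destruct Hv as [x [Hx Hy]].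
      apply in_map_iff in Hy. destruct Hy as [y [Hxy Hy]].
      destruct (M1 x Hx) as [m [Hm Hc]]. destruct (M2 y Hy) as [mk [Hmk Hck]].
      exists (fun j => if Nat.eqb j k then mk else m j). split.
      * rewrite rsum_S, <- Hxy, Hm, Hmk. rewrite Nat.eqb_refl. f_equal.
        apply rsum_ext. intros j Hj. destruct (Nat.eqb_spec j k); [lia|reflexivity].
      * intros j Hj. destruct (Nat.eqb_spec j k). subst; auto. apply Hc; lia.
Qed.

Section Good.
Variable psi : R -> R.
Hypothesis Hd : forall n x, ex_derive_n psi n x.
Hypothesis Hsupp : forall x, 1 < Rabs x -> psi x = 0.

Lemma good L : (forall v, In v L -> psi v = 0) -> exists l : C,
  is_RInt_gen (V:=C_R_NormedModule) (fun a => Cmult (sumee L a) (fourier psi a)) (at_point 0) (Rbar_locally p_infty) l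
  /\ fst l = 0.
Proof.
  induction L as [|v L IH]; intro HL.
  - exists ((0,0) : C). split; [|reflexivity].
    apply (gen_of_family _ (fun _ => ((0,0) : C))).
    + intro b. apply zero_piece. intros. unfold sumee; simpl. unfold Cmult, RtoC. cbn [fst snd]. f_equal; ring.
    + apply filterlim_const.
  - destruct IH as [l1 [H1 F1]]. intros; apply HL; right; auto.
    destruct (core psi Hd Hsupp v) as [l0 [H0 F0]]. apply HL; left; auto.
    exists (plus l0 l1). split.
    + replace (fun a => Cmult (sumee (v :: L) a) (fourier psi a)) with
        (fun a => plus (Cmult (ee (a * v)) (fourier psi a)) (Cmult (sumee L a) (fourier psi a))).
      apply (is_RInt_gen_plus (V:=C_R_NormedModule)); auto.
      apply functional_extensionality. intro a. unfold sumee; simpl. rewrite Cmult_plus_distr_r. reflexivity.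
    + change (fst l0 + fst l1 = 0). rewrite F0, F1. ring.
Qed.

End Good.

Lemma rsum_le k f c : (forall j, (j < k)%nat -> f j <= c) -> rsum k f <= INR k * c.
Proof.
  induction k as [|k IH]; intros H. unfold rsum; simpl. lra.
  rewrite rsum_S, S_INR. assert (rsum k f <= INR k * c) by (apply IH; intros; apply H; lia).
  assert (f k <= c) by (apply H; lia). lra.
Qed.

Theorem lemma2p2 (d : nat) (q : nat -> R) (Cd : R) (psi : R -> R) :
  (5 <= d)%nat ->
  (forall j, (j < d)%nat -> q j <> 0) ->
  (forall j, (j < d)%nat -> exp (exp 1) <= Rabs (q j)) ->
  (* indefinite signature (r, s) with r, s >= 1, as in the definition of beta *)
  (1 <= npos d q)%nat -> (1 <= nneg d q)%nat ->
  1 <= Cd ->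
  (* psi smooth, symmetric probability density supported in [-1, 1] *)
  (forall n x, ex_derive_n psi n x) ->
  (forall x, psi (- x) = psi x) ->
  (forall x, 0 <= psi x) ->
  (forall x, 1 < Rabs x -> psi x = 0) ->
  is_RInt_gen psi (Rbar_locally m_infty) (Rbar_locally p_infty) 1 ->
  (* no nontrivial small solution of |Q(m)| < 1 *)
  (~ exists m : nat -> Z,
       (exists j, (j < d)%nat /\ m j <> 0%Z) /\
       Rabs (rsum d (fun j => q j * IZR (m j) ^ 2)) < 1 /\
       rsum d (fun j => Rabs (q j) * IZR (m j) ^ 2)
         <= 4 * INR d ^ 3 * (Ppar d Cd q) ^ 2) ->
  Re (@RInt_gen C_R_CompleteNormedModule
        (fun a => Cmult (cprod d (fun j => Sj d (Ppar d Cd q) (q j) a))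
                        (fourier psi a))
        (at_point 0) (Rbar_locally p_infty)) = 0.
Proof.
  intros Hd5 _ _ _ _ _ Hd _ _ Hsupp _ Hno.
  set (P := Ppar d Cd q) in *.
  assert (HP : 0 < P) by (unfold P, Ppar; apply exp_pos).
  destruct (cprod_expand d P q d) as [L [HL HM]].
  assert (Hgood : forall v, In v L -> psi v = 0).
  { intros v Hv. destruct (HM v Hv) as [m [Hvm Hc]].
    apply (D_zero psi Hd Hsupp 0).
    destruct (Rlt_or_le (Rabs v) 1) as [Hlt|Hge]; auto. exfalso. apply Hno.
    exists m. split; [|split].
    - exists 0%nat. split. lia. intro E. destruct (Hc 0%nat ltac:(lia)) as [Hc1 _].
      rewrite E in Hc1. rewrite Rmult_0_r in Hc1. lra.
    - rewrite <- Hvm. exact Hlt.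
    - replace (4 * INR d ^ 3 * P ^ 2) with (INR d * (2 * INR d * P) ^ 2) by ring.
      apply rsum_le. intros j Hj. destruct (Hc j Hj) as [Hc1 Hc2].
      rewrite <- (sqrt_sqrt (Rabs (q j))) by apply Rabs_pos.
      replace (sqrt (Rabs (q j)) * sqrt (Rabs (q j)) * IZR (m j) ^ 2) with ((sqrt (Rabs (q j)) * IZR (m j)) ^ 2) by ring.
      apply pow_incr. lra. }
  destruct (good psi Hd Hsupp L Hgood) as [l [Hl Hl0]].
  replace (fun a => Cmult (cprod d (fun j => Sj d P (q j) a)) (fourier psi a))
    with (fun a => Cmult (sumee L a) (fourier psi a)).
  2:{ apply functional_extensionality. intro a. rewrite HL. reflexivity. }
  rewrite (is_RInt_gen_unique (V:=C_R_CompleteNormedModule) _ l Hl). exact Hl0.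
Qed.
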